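(* Let $$\mathcal{Q}=\{(x,y,t)\in\mathbb{R}^3:\ 1-x^2-y^2=\cos(t)\,((1+x)^2+y^2)\}.$$ The connected components of $\mathcal{Q}\cap\{x^2+y^2<1\}$ are the sets $\mathcal{Q}_k=\{(x,y,t): x^2+y^2<1,\ 1-x^2-y^2=\cos t\,((1+x)^2+y^2),\ t\in(2\pi k-\pi/2,\,2\pi k+\pi/2)\}$, $k\in\mathbb{Z}$, and each $\mathcal{Q}_k$, viewed in $\mathbb{D}\times\mathbb{R}$, is a properly embedded minimal surface congruent (by the isometry $g\times$(vertical translation)) to the parabolic catenoid $\Psi_1(\mathbb{R}\times(0,\pi))$, where $\Psi_1(x,t)=(x,\sin t,t)\in\mathfrak{H}\times\mathbb{R}$.
   Context: $\mathbb{D}=\{z:|z|<1\}$ with metric $\frac{4|dz|^2}{(1-|z|^2)^2}$ and $\mathfrak{H}=\{x+{\rm i}y:y>0\}$ with metric $\frac{dx^2+dy^2}{y^2}$ are models of $\mathbb{H}^2$; products with $\mathbb{R}$ carry the product metric with $dt^2$. The isometry $g:\mathbb{D}\to\mathfrak{H}$ is $g(z)={\rm i}\frac{1-z}{1+z}$. Points of $\mathbb{D}\times\mathbb{R}$ are identified with $(x,y,t)\in\mathbb{R}^3$, $x^2+y^2<1$, $z=x+{\rm i}y$. *)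

(* Defs.v *)
From Stdlib Require Import Reals ZArith.
Open Scope R_scope.

Definition set3 := R -> R -> R -> Prop.

(* Open subsets of R^3 (sup-norm balls give the Euclidean topology). *)
Definition open3 (U : set3) : Prop :=
  forall x y t, U x y t -> exists eps, 0 < eps /\
    forall x' y' t', Rabs (x' - x) < eps -> Rabs (y' - y) < eps ->
      Rabs (t' - t) < eps -> U x' y' t'.

Definition connected3 (C : set3) : Prop :=
  ~ exists U V : set3, open3 U /\ open3 V /\
      (forall x y t, C x y t -> U x y t \/ V x y t) /\
      (exists x y t, C x y t /\ U x y t) /\
      (exists x y t, C x y t /\ V x y t) /\
      (forall x y t, C x y t -> U x y t -> V x y t -> False).

Definition connected_component3 (A C : set3) : Prop :=
  (forall x y t, C x y t -> A x y t) /\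
  (exists x y t, C x y t) /\
  connected3 C /\
  (forall C' : set3, connected3 C' ->
     (forall x y t, C x y t -> C' x y t) ->
     (forall x y t, C' x y t -> A x y t) ->
     forall x y t, C' x y t -> C x y t).

Definition DxR : set3 := fun x y t => x ^ 2 + y ^ 2 < 1.

Definition Fq (x y t : R) : R :=
  1 - x ^ 2 - y ^ 2 - cos t * ((1 + x) ^ 2 + y ^ 2).

Definition Qset : set3 := fun x y t => Fq x y t = 0.

Definition Qk (k : Z) : set3 := fun x y t =>
  x ^ 2 + y ^ 2 < 1 /\ 1 - x ^ 2 - y ^ 2 = cos t * ((1 + x) ^ 2 + y ^ 2) /\
  2 * PI * IZR k - PI / 2 < t < 2 * PI * IZR k + PI / 2.

(* Q_k is closed in D x R (properness of the embedding). *)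
Definition rel_closed_in (A S : set3) : Prop :=
  forall x y t, A x y t -> ~ S x y t -> exists eps, 0 < eps /\
    forall x' y' t', Rabs (x' - x) < eps -> Rabs (y' - y) < eps ->
      Rabs (t' - t) < eps -> ~ S x' y' t'.

Definition is_d1 (f f1 : R -> R -> R -> R) (x y t : R) : Prop :=
  derivable_pt_lim (fun s => f s y t) x (f1 x y t).
Definition is_d2 (f f2 : R -> R -> R -> R) (x y t : R) : Prop :=
  derivable_pt_lim (fun s => f x s t) y (f2 x y t).
Definition is_d3 (f f3 : R -> R -> R -> R) (x y t : R) : Prop :=
  derivable_pt_lim (fun s => f x y s) t (f3 x y t).

(* Conformal factor of the disk metric: 4|dz|^2/(1-|z|^2)^2 = lam^2 |dz|^2 *)
Definition lam (x y t : R) : R := 2 / (1 - x ^ 2 - y ^ 2).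

(* S is (an open piece of) a regular level set {F = 0} in D x R with metric
   lam^2 (dx^2+dy^2) + dt^2, which is a minimal surface: its mean curvature
   div_g (grad_g F / |grad_g F|_g) vanishes.  For the diagonal metric
   g = diag(lam^2, lam^2, 1): sqrt(det g) = lam^2, g^{11} = g^{22} = lam^-2,
   g^{33} = 1, so the unit-normal density is
   N = ( F_x/|grad F|, F_y/|grad F|, lam^2 F_t/|grad F| ),
   |grad F|_g = sqrt((F_x^2 + F_y^2)/lam^2 + F_t^2), and
   div_g(nu) = lam^-2 * (d_x N1 + d_y N2 + d_t N3). *)
Definition minimal_regular_levelset (F : R -> R -> R -> R) (S : set3) : Prop :=
  exists F1 F2 F3 : R -> R -> R -> R,
    (forall x y t, DxR x y t ->
       is_d1 F F1 x y t /\ is_d2 F F2 x y t /\ is_d3 F F3 x y t) /\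
    (forall x y t, S x y t ->
       DxR x y t /\ F x y t = 0 /\
       (F1 x y t <> 0 \/ F2 x y t <> 0 \/ F3 x y t <> 0)) /\
    let ng := fun x y t =>
      sqrt ((F1 x y t ^ 2 + F2 x y t ^ 2) / (lam x y t) ^ 2 + F3 x y t ^ 2) in
    let N1 := fun x y t => F1 x y t / ng x y t in
    let N2 := fun x y t => F2 x y t / ng x y t in
    let N3 := fun x y t => (lam x y t) ^ 2 * F3 x y t / ng x y t in
    forall x y t, S x y t -> exists d1 d2 d3,
      is_d1 N1 (fun _ _ _ => d1) x y t /\
      is_d2 N2 (fun _ _ _ => d2) x y t /\
      is_d3 N3 (fun _ _ _ => d3) x y t /\
      d1 + d2 + d3 = 0.

(* The isometry g : D -> H, g(z) = i(1-z)/(1+z), in real coordinates: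
   g(x+iy) = 2y/((1+x)^2+y^2) + i (1-x^2-y^2)/((1+x)^2+y^2). *)
Definition g_re (x y : R) : R := 2 * y / ((1 + x) ^ 2 + y ^ 2).
Definition g_im (x y : R) : R := (1 - x ^ 2 - y ^ 2) / ((1 + x) ^ 2 + y ^ 2).

(* Parabolic catenoid Psi_1(R x (0,pi)) in H x R, as points (u, v, s),
   Psi_1(x,t) = (x, sin t, t) meaning (x + i sin t, t). *)
Definition parabolic_catenoid : set3 := fun u v s =>
  exists a b, 0 < b < PI /\ u = a /\ v = sin b /\ s = b.

(* Main.v *)
Require Import Defs.
From Stdlib Require Import Reals ZArith Lra Lia Psatz Classical.
From Coquelicot Require Import Coquelicot.
Open Scope R_scope.


Lemma cos_perZ (x : R) (k : Z) : cos (x + 2 * PI * IZR k) = cos x.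
Proof.
  destruct (Z_le_gt_dec 0 k) as [H|H].
  - rewrite <- (Z2Nat.id k H), <- INR_IZR_INZ.
    replace (x + 2 * PI * INR (Z.to_nat k)) with (x + 2 * INR (Z.to_nat k) * PI) by ring.
    apply cos_period.
  - assert (H' : (0 <= - k)%Z) by lia.
    set (n := Z.to_nat (-k)).
    assert (Hk : IZR k = - INR n).
    { unfold n. rewrite INR_IZR_INZ, Z2Nat.id by exact H'. rewrite opp_IZR. ring. }
    rewrite Hk.
    rewrite <- (cos_period (x + 2 * PI * - INR n) n).
    f_equal; ring.
Qed.

Lemma sin_perZ (x : R) (k : Z) : sin (x + 2 * PI * IZR k) = sin x.
Proof.
  rewrite !sin_cos.
  replace (PI / 2 + (x + 2 * PI * IZR k)) with ((PI/2 + x) + 2 * PI * IZR k) by ring.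
  rewrite cos_perZ. reflexivity.
Qed.

Lemma cos_pos_band (t : R) : 0 < cos t ->
  exists k : Z, 2 * PI * IZR k - PI / 2 < t < 2 * PI * IZR k + PI / 2.
Proof.
  intro Hc.
  pose proof PI_RGT_0 as HPI.
  set (r := (t + PI / 2) / (2 * PI)).
  destruct (archimed r) as [H1 H2].
  exists (up r - 1)%Z.
  rewrite minus_IZR.
  set (u := IZR (up r)) in *.
  assert (Hr : t + PI/2 = r * (2 * PI)) by (unfold r; field; lra).
  assert (A : 2 * PI * (u - 1) - PI / 2 <= t).
  { assert (u - 1 <= r) by lra.
    assert ((u-1) * (2*PI) <= r * (2*PI)) by (apply Rmult_le_compat_r; lra). nra. }
  assert (B : t < 2 * PI * (u - 1) + 3 * PI / 2).
  { assert (r * (2*PI) < u * (2*PI)) by (apply Rmult_lt_compat_r; lra). nra. }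
  set (s := t - 2 * PI * (u - 1)).
  assert (Hcs : cos s = cos t).
  { unfold s. replace t with (s + 2 * PI * IZR (up r - 1)) at 2
      by (unfold s, u; rewrite minus_IZR; ring).
    rewrite cos_perZ; reflexivity. }
  destruct (Rle_lt_dec (PI/2) s) as [Hs|Hs].
  - assert (cos s <= 0) by (apply cos_le_0; unfold s in *; lra). lra.
  - destruct (Req_dec s (-(PI/2))) as [He|He].
    + rewrite He, cos_neg, cos_PI2 in Hcs. lra.
    + unfold s in *; split; lra.
Qed.

Lemma cos_band_edge (k : Z) : cos (2 * PI * IZR k - PI / 2) = 0 /\ cos (2 * PI * IZR k + PI / 2) = 0.
Proof.
  split.
  - replace (2 * PI * IZR k - PI / 2) with (- (PI/2) + 2 * PI * IZR k) by ring.
    rewrite cos_perZ, cos_neg, cos_PI2; reflexivity.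
  - replace (2 * PI * IZR k + PI / 2) with ((PI/2) + 2 * PI * IZR k) by ring.
    rewrite cos_perZ, cos_PI2; reflexivity.
Qed.

Lemma band_unique (k j : Z) (t : R) :
  2 * PI * IZR k - PI / 2 < t < 2 * PI * IZR k + PI / 2 ->
  2 * PI * IZR j - PI / 2 < t < 2 * PI * IZR j + PI / 2 -> k = j.
Proof.
  intros [A B] [C D]. pose proof PI_RGT_0.
  assert (IZR k < IZR j + 1).
  { assert (2*PI*IZR k < 2*PI*(IZR j + 1)) by lra.
    apply (Rmult_lt_reg_l (2*PI)); lra. }
  assert (IZR j < IZR k + 1).
  { assert (2*PI*IZR j < 2*PI*(IZR k + 1)) by lra.
    apply (Rmult_lt_reg_l (2*PI)); lra. }
  rewrite <- plus_IZR in *. apply lt_IZR in H0. apply lt_IZR in H1. lia.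
Qed.

Lemma cont_eps (f : R -> R) (x : R) : continuity_pt f x ->
  forall eps, 0 < eps -> exists d, 0 < d /\ forall x', Rabs (x' - x) < d -> Rabs (f x' - f x) < eps.
Proof.
  intros Hc eps He.
  destruct (Hc eps He) as [d [Hd H]].
  exists d; split; [exact Hd|].
  intros x' Hx'.
  destruct (Req_dec x' x) as [E|E].
  - subst. rewrite Rminus_eq_0, Rabs_R0. exact He.
  - apply (H x'). split; [split; [exact I| auto] | exact Hx'].
Qed.

Lemma open_path (U : set3) (g1 g2 g3 : R -> R) (s : R) :
  open3 U -> continuity_pt g1 s -> continuity_pt g2 s -> continuity_pt g3 s ->
  U (g1 s) (g2 s) (g3 s) ->
  exists d, 0 < d /\ forall s', Rabs (s' - s) < d -> U (g1 s') (g2 s') (g3 s').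
Proof.
  intros HU c1 c2 c3 Hs.
  destruct (HU _ _ _ Hs) as [e [He HH]].
  destruct (cont_eps _ _ c1 e He) as [d1 [Hd1 D1]].
  destruct (cont_eps _ _ c2 e He) as [d2 [Hd2 D2]].
  destruct (cont_eps _ _ c3 e He) as [d3 [Hd3 D3]].
  exists (Rmin d1 (Rmin d2 d3)). split.
  - repeat apply Rmin_pos; auto.
  - intros s' Hs'. apply HH.
    + apply D1. eapply Rlt_le_trans; [exact Hs'|]. apply Rmin_l.
    + apply D2. eapply Rlt_le_trans; [exact Hs'|]. eapply Rle_trans; [apply Rmin_r|apply Rmin_l].
    + apply D3. eapply Rlt_le_trans; [exact Hs'|]. eapply Rle_trans; [apply Rmin_r|apply Rmin_r].
Qed.

Lemma path_conn (C U V : set3) (g1 g2 g3 : R -> R) :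
  (forall s, 0 <= s <= 1 -> continuity_pt g1 s /\ continuity_pt g2 s /\ continuity_pt g3 s) ->
  (forall s, 0 <= s <= 1 -> C (g1 s) (g2 s) (g3 s)) ->
  open3 U -> open3 V ->
  (forall x y t, C x y t -> U x y t \/ V x y t) ->
  (forall x y t, C x y t -> U x y t -> V x y t -> False) ->
  U (g1 0) (g2 0) (g3 0) -> V (g1 1) (g2 1) (g3 1) -> False.
Proof.
  intros Hc HC HU HV Hcov Hdis H0 H1.
  set (A := fun s => 0 <= s <= 1 /\ forall s', 0 <= s' <= s -> U (g1 s') (g2 s') (g3 s')).
  assert (Hb : bound A) by (exists 1; intros s [Hs _]; lra).
  assert (Hne : exists s, A s).
  { exists 0. split; [lra|]. intros s' Hs'. replace s' with 0 by lra. exact H0. }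
  destruct (completeness A Hb Hne) as [m [Hub Hlub]].
  assert (Hm0 : 0 <= m) by (apply Hub; destruct Hne as [s Hs]; unfold A; split; [lra|];
    intros s' Hs'; replace s' with 0 by lra; exact H0).
  assert (Hm1 : m <= 1) by (apply Hlub; intros s [Hs _]; lra).
  assert (Happ : forall r, r < m -> exists s, A s /\ r < s).
  { intros r Hr. apply NNPP. intro Hn.
    assert (m <= r). { apply Hlub. intros s Hs. apply Rnot_lt_le. intro Hrs. apply Hn. eauto. }
    lra. }
  assert (Hcm := Hc m (conj Hm0 Hm1)). destruct Hcm as [c1 [c2 c3]].
  destruct (Hcov _ _ _ (HC m (conj Hm0 Hm1))) as [Um|Vm].
  - destruct (open_path U g1 g2 g3 m HU c1 c2 c3 Um) as [d [Hd HD]].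
    assert (Hall : forall s', 0 <= s' <= m -> U (g1 s') (g2 s') (g3 s')).
    { intros s' Hs'. destruct (Req_dec s' m) as [E|E]. subst; exact Um.
      destruct (Happ s') as [s [[_ As] Hss]]. lra. apply As. lra. }
    destruct (Req_dec m 1) as [E|E].
    + subst m. exact (Hdis _ _ _ (HC 1 ltac:(lra)) (Hall 1 ltac:(lra)) H1).
    + set (m' := Rmin 1 (m + d/2)).
      assert (m' <= m).
      { apply Hub. split. unfold m'. split. apply Rmin_glb; lra. apply Rmin_l.
        intros s' Hs'. destruct (Rle_lt_dec s' m). apply Hall; lra.
        apply HD. assert (m' <= m + d/2) by apply Rmin_r. rewrite Rabs_right; lra. }
      assert (m < m'). { unfold m'. apply Rmin_glb_lt; lra. } lra.
  - destruct (open_path V g1 g2 g3 m HV c1 c2 c3 Vm) as [d [Hd HD]].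
    destruct (Req_dec m 0) as [E|E].
    + subst m. exact (Hdis _ _ _ (HC 0 ltac:(lra)) H0 Vm).
    + destruct (Happ (m - d)) as [s [[Hs As] Hss]]. lra.
      assert (s <= m) by (apply Hub; split; auto).
      apply (Hdis _ _ _ (HC s Hs)).
      * apply As; lra.
      * apply HD. rewrite Rabs_left1; lra.
Qed.

Definition Xp (u v : R) := (1 - u^2 - v^2) / (u^2 + (1+v)^2).
Definition Yp (u v : R) := 2*u / (u^2 + (1+v)^2).

Lemma Den_pos (u v : R) : 0 < v -> 0 < u^2 + (1+v)^2.
Proof. intros; nra. Qed.

Lemma XY_disk (u v : R) : 0 < v -> Xp u v ^ 2 + Yp u v ^ 2 = 1 - 4 * v / (u^2 + (1+v)^2).
Proof. intros Hv. pose proof (Den_pos u v Hv). unfold Xp, Yp. field. lra. Qed.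

Lemma XY_D (u v : R) : 0 < v -> (1 + Xp u v) ^ 2 + Yp u v ^ 2 = 4 / (u^2 + (1+v)^2).
Proof. intros Hv. pose proof (Den_pos u v Hv). unfold Xp, Yp. field. lra. Qed.

Lemma g_XY (u v : R) : 0 < v -> g_re (Xp u v) (Yp u v) = u /\ g_im (Xp u v) (Yp u v) = v.
Proof.
  intros Hv. pose proof (Den_pos u v Hv).
  pose proof (XY_D u v Hv) as E.
  unfold g_re, g_im. rewrite E.
  assert (E2 : 1 - Xp u v ^ 2 - Yp u v ^ 2 = 4 * v / (u^2 + (1+v)^2)) by (pose proof (XY_disk u v Hv); lra).
  split.
  - unfold Yp. field. lra.
  - rewrite E2. field. lra.
Qed.

Lemma D_pos (x y : R) : x^2 + y^2 < 1 -> 0 < (1+x)^2 + y^2.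
Proof. intros. nra. Qed.

Lemma XY_g (x y : R) : x^2 + y^2 < 1 ->
  Xp (g_re x y) (g_im x y) = x /\ Yp (g_re x y) (g_im x y) = y.
Proof.
  intros H. pose proof (D_pos x y H) as HD.
  assert (E : (g_re x y)^2 + (1 + g_im x y)^2 = 4 / ((1+x)^2+y^2)).
  { unfold g_re, g_im. field. lra. }
  unfold Xp, Yp. rewrite E. unfold g_re, g_im. split; field; lra.
Qed.

Definition cst (k : Z) := PI / 2 - 2 * PI * IZR k.

Lemma cos_shiftk (k : Z) (b : R) : cos (b - cst k) = sin b.
Proof.
  unfold cst. replace (b - (PI / 2 - 2 * PI * IZR k)) with (-(PI/2 - b) + 2 * PI * IZR k) by ring.
  rewrite cos_perZ, cos_neg, cos_shift. reflexivity.
Qed.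

Lemma sin_shiftk (k : Z) (t : R) : sin (t + cst k) = cos t.
Proof.
  unfold cst. replace (t + (PI / 2 - 2 * PI * IZR k)) with ((PI/2 - - t) + 2 * PI * - IZR k) by ring.
  rewrite <- opp_IZR, sin_perZ, sin_shift, cos_neg. reflexivity.
Qed.

Lemma phi_in (k : Z) (a b : R) : 0 < b < PI ->
  Qk k (Xp a (sin b)) (Yp a (sin b)) (b - cst k).
Proof.
  intros Hb. assert (Hs : 0 < sin b) by (apply sin_gt_0; lra).
  pose proof (Den_pos a _ Hs) as HD.
  assert (0 < 4 * sin b / (a ^ 2 + (1 + sin b) ^ 2)) by (apply Rdiv_lt_0_compat; lra).
  split; [|split].
  - rewrite XY_disk by exact Hs. lra.
  - rewrite cos_shiftk.
    replace (1 - Xp a (sin b) ^ 2 - Yp a (sin b) ^ 2) with (1 - (Xp a (sin b) ^ 2 + Yp a (sin b) ^ 2)) by ring.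
    rewrite XY_disk, XY_D by exact Hs. field. lra.
  - unfold cst. lra.
Qed.

Lemma Qk_cos (k : Z) x y t : Qk k x y t -> cos t = g_im x y.
Proof.
  intros [H1 [H2 _]]. pose proof (D_pos x y H1). unfold g_im. rewrite H2. field. lra.
Qed.

Lemma phi_onto (k : Z) x y t : Qk k x y t ->
  0 < t + cst k < PI /\ Xp (g_re x y) (sin (t + cst k)) = x /\
  Yp (g_re x y) (sin (t + cst k)) = y.
Proof.
  intros HQ. pose proof HQ as [H1 [H2 H3]].
  rewrite sin_shiftk, (Qk_cos k x y t HQ). destruct (XY_g x y H1) as [A B].
  split; [unfold cst; lra| auto].
Qed.

Lemma exd_cont (f : R -> R) (x : R) : ex_derive f x -> continuity_pt f x.
Proof. intros H. apply continuity_pt_filterlim. exact (ex_derive_continuous f x H). Qed.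

Lemma cont_X (a0 a1 b0 b1 s : R) : 0 < sin (b0 + s * (b1 - b0)) ->
  continuity_pt (fun s => Xp (a0 + s * (a1 - a0)) (sin (b0 + s * (b1 - b0)))) s /\
  continuity_pt (fun s => Yp (a0 + s * (a1 - a0)) (sin (b0 + s * (b1 - b0)))) s.
Proof.
  intros Hs.
  pose proof (Den_pos (a0 + s * (a1 - a0)) _ Hs).
  split; apply exd_cont; unfold Xp, Yp;
    auto_derive; lra.
Qed.

Lemma Qk_connected (k : Z) : connected3 (Qk k).
Proof.
  unfold connected3. intros [U [V [HU [HV [Hcov [[x0 [y0 [t0 [P0 U0]]]] [[x1 [y1 [t1 [P1 V1]]]] Hdis]]]]]]].
  destruct (phi_onto k _ _ _ P0) as [B0 [X0 Y0]].
  destruct (phi_onto k _ _ _ P1) as [B1 [X1 Y1]].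
  set (a0 := g_re x0 y0) in *. set (a1 := g_re x1 y1) in *.
  set (b0 := t0 + cst k) in *. set (b1 := t1 + cst k) in *.
  assert (Hb : forall s, 0 <= s <= 1 -> 0 < b0 + s * (b1 - b0) < PI).
  { intros s Hs. assert (0 <= s * b1) by nra. assert (0 <= (1-s)*b0) by nra. assert (s * b1 <= s * PI) by nra. assert ((1-s)*b0 <= (1-s)*PI) by nra. split; [|]; nra. }
  apply (path_conn (Qk k) U V
    (fun s => Xp (a0 + s * (a1 - a0)) (sin (b0 + s * (b1 - b0))))
    (fun s => Yp (a0 + s * (a1 - a0)) (sin (b0 + s * (b1 - b0))))
    (fun s => (b0 + s * (b1 - b0)) - cst k)); auto.
  - intros s Hs. pose proof (Hb s Hs).
    assert (0 < sin (b0 + s * (b1 - b0))) by (apply sin_gt_0; lra).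
    destruct (cont_X a0 a1 b0 b1 s H0). repeat split; auto.
    apply exd_cont. auto_derive. auto.
  - intros s Hs. apply phi_in. auto.
  - simpl. replace (a0 + 0 * (a1 - a0)) with a0 by ring.
    replace (b0 + 0 * (b1 - b0)) with b0 by ring. rewrite X0, Y0.
    unfold b0. replace (t0 + cst k - cst k) with t0 by ring. exact U0.
  - simpl. replace (a0 + 1 * (a1 - a0)) with a1 by ring.
    replace (b0 + 1 * (b1 - b0)) with b1 by ring. rewrite X1, Y1.
    unfold b1. replace (t1 + cst k - cst k) with t1 by ring. exact V1.
Qed.

Definition Aset : set3 := fun x y t => Qset x y t /\ DxR x y t.

Lemma A_cos x y t : Aset x y t -> 0 < cos t.
Proof.
  intros [H1 H2]. unfold Qset, Fq in H1. unfold DxR in H2.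
  pose proof (D_pos x y H2). nra.
Qed.

Lemma A_Qk k x y t : Aset x y t ->
  2 * PI * IZR k - PI / 2 < t < 2 * PI * IZR k + PI / 2 -> Qk k x y t.
Proof.
  intros [H1 H2] H3. unfold Qset, Fq in H1. unfold DxR in H2. split; [auto|split; [lra|auto]].
Qed.

Lemma Qk_A k x y t : Qk k x y t -> Aset x y t.
Proof. intros [H1 [H2 H3]]. split; unfold Qset, Fq, DxR; lra. Qed.

Lemma open_t (P : R -> Prop) : (forall t, P t -> exists e, 0 < e /\ forall t', Rabs (t' - t) < e -> P t') ->
  open3 (fun _ _ t => P t).
Proof.
  intros H x y t Ht. destruct (H t Ht) as [e [He HH]]. exists e. split; auto.
Qed.

Lemma sep (k : Z) (C : set3) : connected3 C -> (forall x y t, C x y t -> Aset x y t) ->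
  (exists x y t, C x y t /\ Qk k x y t) -> forall x y t, C x y t -> Qk k x y t.
Proof.
  intros Hc HA [x0 [y0 [t0 [C0 Q0]]]] x y t Ct.
  apply NNPP. intro Hn. apply Hc.
  set (lo := 2 * PI * IZR k - PI / 2). set (hi := 2 * PI * IZR k + PI / 2).
  destruct (cos_band_edge k) as [Elo Ehi]. fold lo in Elo. fold hi in Ehi.
  exists (fun _ _ t => lo < t < hi), (fun _ _ t => t < lo \/ hi < t).
  split; [|split; [|split; [|split; [|split]]]].
  - apply open_t. intros s Hs. exists (Rmin (s - lo) (hi - s)). split.
    + apply Rmin_pos; lra.
    + intros s' Hs'. pose proof (Rmin_l (s - lo) (hi - s)). pose proof (Rmin_r (s - lo) (hi - s)).
      apply Rabs_def2 in Hs'. lra.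
  - apply open_t. intros s [Hs|Hs].
    + exists (lo - s). split; [lra|]. intros s' Hs'. apply Rabs_def2 in Hs'. lra.
    + exists (s - hi). split; [lra|]. intros s' Hs'. apply Rabs_def2 in Hs'. lra.
  - intros a b s Hs. pose proof (A_cos _ _ _ (HA _ _ _ Hs)) as Hcs.
    destruct (Rtotal_order s lo) as [L|[E|G]]; [right; left; auto| subst; lra|].
    destruct (Rtotal_order s hi) as [L2|[E2|G2]]; [left; split; auto| subst; lra| right; right; auto].
  - exists x0, y0, t0. split; auto. destruct Q0 as [_ [_ Q]]. exact Q.
  - exists x, y, t. split; auto.
    destruct (Rtotal_order t lo) as [L|[E|G]]; [left; auto| |].
    + subst t. pose proof (A_cos _ _ _ (HA _ _ _ Ct)). lra.
    + destruct (Rtotal_order t hi) as [L2|[E2|G2]]; [|subst t; pose proof (A_cos _ _ _ (HA _ _ _ Ct)); lra| right; auto].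
      exfalso. apply Hn. apply A_Qk; [auto | split; auto].
  - intros a b s _ H1 H2. lra.
Qed.

Lemma connected3_ext (C D : set3) : (forall x y t, C x y t <-> D x y t) -> connected3 C -> connected3 D.
Proof.
  intros E Hc [U [V [HU [HV [Hcov [[x0 [y0 [t0 [P0 U0]]]] [[x1 [y1 [t1 [P1 V1]]]] Hdis]]]]]]].
  apply Hc. exists U, V. repeat split; auto.
  - intros x y t H. apply Hcov, E, H.
  - exists x0, y0, t0. split; [apply E|]; auto.
  - exists x1, y1, t1. split; [apply E|]; auto.
  - intros x y t H. apply Hdis, E, H.
Qed.

Lemma Qk_nonempty k : Qk k 0 0 (2 * PI * IZR k).
Proof.
  pose proof PI_RGT_0.
  assert (cos (2 * PI * IZR k) = 1) by (rewrite <- (Rplus_0_l (2 * PI * IZR k)), cos_perZ; apply cos_0).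
  split; [|split]; [lra| rewrite H0; ring | lra].
Qed.

Lemma components (C : set3) :
  connected_component3 Aset C <-> exists k : Z, forall x y t, C x y t <-> Qk k x y t.
Proof.
  split.
  - intros [HA [[x [y [t Ct]]] [Hc Hmax]]].
    destruct (cos_pos_band t (A_cos _ _ _ (HA _ _ _ Ct))) as [k Hk].
    exists k.
    assert (S1 : forall x y t, C x y t -> Qk k x y t).
    { apply sep; auto. exists x, y, t. split; auto. apply A_Qk; auto. }
    intros a b s. split; [apply S1|].
    apply (Hmax (Qk k) (Qk_connected k) S1 (Qk_A k)).
  - intros [k E]. split; [|split; [|split]].
    + intros x y t H. apply (Qk_A k), E, H.
    + exists 0, 0, (2 * PI * IZR k). apply E, Qk_nonempty.
    + apply (connected3_ext (Qk k)); [intros; split; apply E|apply Qk_connected].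
    + intros C' Hc' Hsub HA x y t Ht. apply E.
      apply (sep k C' Hc' HA); auto.
      exists 0, 0, (2 * PI * IZR k). split; [apply Hsub, E|]; apply Qk_nonempty.
Qed.

Lemma abs_le3 (a : R) : -3 <= a <= 3 -> Rabs a <= 3.
Proof. intros. apply Rabs_le. lra. Qed.

Lemma sq_diff (a a' e : R) : -1 < a < 1 -> Rabs (a' - a) < e -> e <= 1 ->
  Rabs (a' ^ 2 - a ^ 2) <= 3 * e /\ Rabs (a') <= 2.
Proof.
  intros Ha H He. pose proof H as H'. apply Rabs_def2 in H'.
  replace (a'^2 - a^2) with ((a' - a) * (a' + a)) by ring.
  rewrite Rabs_mult. split.
  - assert (Rabs (a' + a) <= 3) by (apply abs_le3; lra).
    pose proof (Rabs_pos (a' - a)). nra.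
  - apply Rabs_le. lra.
Qed.

Lemma Fq_cont x y t : x ^ 2 + y ^ 2 < 1 -> Fq x y t <> 0 ->
  exists e, 0 < e /\ forall x' y' t', Rabs (x' - x) < e -> Rabs (y' - y) < e ->
    Rabs (t' - t) < e -> Fq x' y' t' <> 0.
Proof.
  intros Hd Hn.
  set (m := Rabs (Fq x y t)).
  assert (Hm : 0 < m) by (apply Rabs_pos_lt; auto).
  destruct (cont_eps cos t (continuity_cos t) (m / 30) ltac:(lra)) as [d [Hd0 Hcd]].
  assert (Hx : -1 < x < 1) by nra. assert (Hy : -1 < y < 1) by nra.
  exists (Rmin 1 (Rmin d (m / 30))). split.
  { repeat apply Rmin_pos; lra. }
  intros x' y' t' Ex Ey Et.
  pose proof (Rmin_l 1 (Rmin d (m / 30))) as M1.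
  pose proof (Rmin_r 1 (Rmin d (m / 30))) as M2.
  pose proof (Rmin_l d (m / 30)) as M3. pose proof (Rmin_r d (m / 30)) as M4.
  set (e := Rmin 1 (Rmin d (m / 30))) in *.
  destruct (sq_diff x x' e Hx Ex M1) as [Sx Ax].
  destruct (sq_diff y y' e Hy Ey M1) as [Sy Ay].
  assert (Ec : Rabs (cos t' - cos t) < m / 30) by (apply Hcd; lra).
  set (Q' := (1 + x') ^ 2 + y' ^ 2). set (Q := (1 + x) ^ 2 + y ^ 2).
  assert (HQ' : Rabs Q' <= 13).
  { apply Rabs_def2 in Ex. apply Rabs_def2 in Ey. unfold Q'. apply Rabs_le. split; nra. }
  assert (HQQ : Rabs (Q' - Q) <= 8 * e).
  { unfold Q', Q.
    replace ((1 + x') ^ 2 + y' ^ 2 - ((1 + x) ^ 2 + y ^ 2)) with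
      ((x' - x) * (2 + x' + x) + (y' - y) * (y' + y)) by ring.
    eapply Rle_trans; [apply Rabs_triang|]. rewrite !Rabs_mult.
    assert (Rabs (2 + x' + x) <= 5) by (apply Rabs_def2 in Ex; apply Rabs_le; lra).
    assert (Rabs (y' + y) <= 3) by (apply Rabs_def2 in Ey; apply Rabs_le; lra).
    pose proof (Rabs_pos (x' - x)). pose proof (Rabs_pos (y' - y)). nra. }
  assert (Hc1 : Rabs (cos t) <= 1) by (apply Rabs_le; apply COS_bound).
  assert (T1 : Rabs ((cos t' - cos t) * Q') <= 13 * (m / 30)).
  { rewrite Rabs_mult. pose proof (Rabs_pos (cos t' - cos t)). pose proof (Rabs_pos Q'). nra. }
  assert (T2 : Rabs (cos t * (Q' - Q)) <= 8 * e).
  { rewrite Rabs_mult. pose proof (Rabs_pos (cos t)). pose proof (Rabs_pos (Q' - Q)). nra. }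
  assert (Eq : Fq x' y' t' = Fq x y t - (x'^2 - x^2) - (y'^2 - y^2)
                - (cos t' - cos t) * Q' - cos t * (Q' - Q)).
  { unfold Fq, Q, Q'. ring. }
  intro Hz. rewrite Hz in Eq.
  assert (Hsum : Rabs (Fq x y t) <= Rabs (x'^2 - x^2) + Rabs (y'^2 - y^2) +
     Rabs ((cos t' - cos t) * Q') + Rabs (cos t * (Q' - Q))).
  { replace (Fq x y t) with ((x'^2 - x^2) + (y'^2 - y^2) + (cos t' - cos t) * Q' + cos t * (Q' - Q)) by lra.
    eapply Rle_trans; [apply Rabs_triang|].
    eapply Rle_trans; [apply Rplus_le_compat_r, Rabs_triang|].
    eapply Rle_trans; [apply Rplus_le_compat_r, Rplus_le_compat_r, Rabs_triang|]. lra. }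
  fold m in Hsum. lra.
Qed.

Lemma Qk_relclosed k : rel_closed_in DxR (Qk k).
Proof.
  intros x y t Hd Hn. unfold DxR in Hd.
  destruct (Req_dec (Fq x y t) 0) as [Z|Z].
  -
    set (lo := 2 * PI * IZR k - PI / 2). set (hi := 2 * PI * IZR k + PI / 2).
    destruct (cos_band_edge k) as [Elo Ehi]. fold lo in Elo. fold hi in Ehi.
    assert (Hc : 0 < cos t) by (apply (A_cos x y t); split; auto).
    assert (Ht : t < lo \/ hi < t).
    { destruct (Rtotal_order t lo) as [L|[E|G]]; [left; auto| subst; lra|].
      destruct (Rtotal_order t hi) as [L2|[E2|G2]]; [|subst; lra| right; auto].
      exfalso. apply Hn. apply A_Qk; [split; auto| split; auto]. }
    destruct Ht as [Ht|Ht].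
    + exists (lo - t). split; [lra|]. intros x' y' t' _ _ Et [_ [_ B]].
      apply Rabs_def2 in Et. fold lo in B. lra.
    + exists (t - hi). split; [lra|]. intros x' y' t' _ _ Et [_ [_ B]].
      apply Rabs_def2 in Et. fold hi in B. lra.
  - destruct (Fq_cont x y t Hd Z) as [e [He H]]. exists e. split; auto.
    intros x' y' t' E1 E2 E3 Hq. apply (H x' y' t' E1 E2 E3).
    apply (Qk_A k) in Hq. destruct Hq as [Hq _]. exact Hq.
Qed.

Lemma congruence k : exists c : R,
       (forall x y t, Qk k x y t ->
          parabolic_catenoid (g_re x y) (g_im x y) (t + c)) /\
       (forall u v s, parabolic_catenoid u v s ->
          exists x y t, Qk k x y t /\
            g_re x y = u /\ g_im x y = v /\ t + c = s).
Proof.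
  exists (cst k). split.
  - intros x y t HQ. destruct (phi_onto k x y t HQ) as [B _].
    exists (g_re x y), (t + cst k). split; [auto|split; [auto|split; [|auto]]].
    rewrite sin_shiftk. symmetry. apply (Qk_cos k x y t HQ).
  - intros u v s [a [b [Hb [Hu [Hv Hs]]]]]. subst.
    assert (Hs : 0 < sin b) by (apply sin_gt_0; lra).
    exists (Xp a (sin b)), (Yp a (sin b)), (b - cst k).
    destruct (g_XY a (sin b) Hs) as [G1 G2].
    split; [apply phi_in; auto| split; [auto|split; [auto|ring]]].
Qed.
Lemma core (x y c S : R) :
  let p := 1 - x^2 - y^2 in let D := (1+x)^2+y^2 in
  c = p / D -> S = 1 - c ^ 2 -> D <> 0 ->
  let w := p^2/4 in
  let F1 := -2*x-2*c*(1+x) in let F2 := -2*y-2*c*y in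
  let F1x := -2-2*c in let F2y := -2-2*c in let F3t := c*D in
  let G0 := (F1^2+F2^2)*w in
  let Gx0 := 2*F1*F1x*w+(F1^2+F2^2)*(-x*p) in
  let Gy0 := 2*F2*F2y*w+(F1^2+F2^2)*(-y*p) in
  ((F1x+F2y)*w+F3t)*(G0 + S * D^2) -
   ((F1*(Gx0 + S*(4*D*(1+x))) + F2*(Gy0 + S*(4*D*y)))*w
     + S*(D*(4*(F1*(1+x)+F2*y)*w + 2*c*D^2)))/2 = 0.
Proof.
  intros p D Hc HS HD w F1 F2 F1x F2y F3t G0 Gx0 Gy0.
  subst S. subst c. unfold G0, Gx0, Gy0, F1, F2, F1x, F2y, F3t, w, D, p in *.
  field. exact HD.
Qed.
Lemma dsqrt_quot (f g : R -> R) (x f' g' : R) :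
  derivable_pt_lim f x f' -> derivable_pt_lim g x g' -> 0 < g x ->
  derivable_pt_lim (fun s => f s / sqrt (g s)) x
    (f' / sqrt (g x) - f x * g' / (2 * sqrt (g x) * g x)).
Proof.
  intros Hf Hg Hpos.
  assert (Hs : derivable_pt_lim (fun s => sqrt (g s)) x (/ (2 * sqrt (g x)) * g')).
  { apply (derivable_pt_lim_comp g sqrt x g' (/ (2 * sqrt (g x)))); auto.
    apply derivable_pt_lim_sqrt; auto. }
  assert (Hq : 0 < sqrt (g x)) by (apply sqrt_lt_R0; auto).
  pose proof (derivable_pt_lim_div f (fun s => sqrt (g s)) x f' _ Hf Hs ltac:(lra)) as H.
  unfold div_fct in H.
  replace (f' / sqrt (g x) - f x * g' / (2 * sqrt (g x) * g x)) with
    ((f' * sqrt (g x) - / (2 * sqrt (g x)) * g' * f x) / (sqrt (g x))²); [exact H|].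
  rewrite Rsqr_sqrt by lra. assert (HG : g x = sqrt (g x) * sqrt (g x)) by (rewrite sqrt_sqrt; lra). set (r := sqrt (g x)) in *. rewrite HG. field. lra.
Qed.

Definition F1f (x y t : R) := -2*x - 2*cos t*(1+x).
Definition F2f (x y t : R) := -2*y - 2*cos t*y.
Definition F3f (x y t : R) := sin t*((1+x)^2+y^2).
Definition Gf (x y t : R) := (F1f x y t ^ 2 + F2f x y t ^ 2) / lam x y t ^ 2 + F3f x y t ^ 2.

Definition pp (x y : R) := 1 - x^2 - y^2.
Definition DD (x y : R) := (1+x)^2 + y^2.
Definition ww (x y : R) := pp x y ^2 / 4.
Definition Gx (x y t : R) := 2*F1f x y t*(-2-2*cos t)*ww x y + (F1f x y t^2+F2f x y t^2)*(-x*pp x y)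
   + 2*F3f x y t*(2*sin t*(1+x)).
Definition Gy (x y t : R) := 2*F2f x y t*(-2-2*cos t)*ww x y + (F1f x y t^2+F2f x y t^2)*(-y*pp x y)
   + 2*F3f x y t*(2*sin t*y).
Definition Gt (x y t : R) := 2*(F1f x y t*(2*sin t*(1+x))+F2f x y t*(2*sin t*y))*ww x y
   + 2*F3f x y t*(cos t*DD x y).

Lemma d_Fq1 x y t : is_d1 Fq F1f x y t.
Proof. unfold is_d1, Fq, F1f. apply is_derive_Reals. auto_derive; auto. ring. Qed.
Lemma d_Fq2 x y t : is_d2 Fq F2f x y t.
Proof. unfold is_d2, Fq, F2f. apply is_derive_Reals. auto_derive; auto. ring. Qed.
Lemma d_Fq3 x y t : is_d3 Fq F3f x y t.
Proof. unfold is_d3, Fq, F3f. apply is_derive_Reals. auto_derive; auto. ring. Qed.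

Ltac nzp Hp := match goal with
  | |- True => exact I
  | |- _ /\ _ => split; nzp Hp
  | |- _ * _ <> 0 => apply Rmult_integral_contrapositive_currified; nzp Hp
  | |- / _ <> 0 => apply Rinv_neq_0_compat; nzp Hp
  | |- _ => try lra; (let E := fresh "E" in intro E; apply Hp; rewrite <- E; ring)
  end.

Lemma d_G1 x y t : pp x y <> 0 -> derivable_pt_lim (fun s => Gf s y t) x (Gx x y t).
Proof.
  intros Hp. unfold pp in Hp. unfold Gf, Gx, F1f, F2f, F3f, lam, ww, pp. apply is_derive_Reals.
  auto_derive; [nzp Hp|]. field. nzp Hp.
Qed.
Lemma d_G2 x y t : pp x y <> 0 -> derivable_pt_lim (fun s => Gf x s t) y (Gy x y t).
Proof.
  intros Hp. unfold pp in Hp. unfold Gf, Gy, F1f, F2f, F3f, lam, ww, pp. apply is_derive_Reals.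
  auto_derive; [nzp Hp|]. field. nzp Hp.
Qed.
Lemma d_G3 x y t : pp x y <> 0 -> derivable_pt_lim (fun s => Gf x y s) t (Gt x y t).
Proof.
  intros Hp. unfold pp in Hp. unfold Gf, Gt, F1f, F2f, F3f, lam, ww, pp, DD. apply is_derive_Reals.
  auto_derive; [nzp Hp|]. field. nzp Hp.
Qed.
Lemma nondeg k x y t : Qk k x y t -> F1f x y t <> 0 \/ F2f x y t <> 0 \/ F3f x y t <> 0.
Proof.
  intros HQ. pose proof (Qk_A k x y t HQ) as HA. pose proof (A_cos x y t HA) as Hc.
  destruct HQ as [H1 [H2 _]]. pose proof (D_pos x y H1) as HD.
  destruct (Req_dec (F3f x y t) 0) as [E3|E3]; [|right; right; auto].
  unfold F3f in E3.
  assert (Hs : sin t = 0).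
  { destruct (Rmult_integral _ _ E3); auto. lra. }
  assert (Hc1 : cos t = 1).
  { pose proof (sin2_cos2 t) as S. rewrite Hs in S. unfold Rsqr in S. nra. }
  destruct (Req_dec (F1f x y t) 0) as [E1|E1]; [|left; auto].
  unfold F1f in E1. rewrite Hc1 in E1, H2.
  right; left. unfold F2f. rewrite Hc1. intro E2.
  assert (x = -1/2) by lra. assert (y = 0) by lra. subst. lra.
Qed.

Lemma G_pos k x y t : Qk k x y t -> 0 < Gf x y t.
Proof.
  intros HQ. pose proof (nondeg k x y t HQ) as N.
  destruct HQ as [H1 _].
  assert (Hl : 0 < lam x y t ^ 2).
  { unfold lam. assert (0 < 2 / (1 - x^2 - y^2)) by (apply Rdiv_lt_0_compat; lra). nra. }
  unfold Gf.
  assert (0 <= (F1f x y t ^ 2 + F2f x y t ^ 2) / lam x y t ^ 2).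
  { apply Rdiv_le_0_compat; nra. }
  destruct N as [N|[N|N]].
  - assert (0 < (F1f x y t ^ 2 + F2f x y t ^ 2) / lam x y t ^ 2).
    { apply Rdiv_lt_0_compat; auto. assert (0 < F1f x y t ^2) by (apply pow2_gt_0; auto). nra. }
    nra.
  - assert (0 < (F1f x y t ^ 2 + F2f x y t ^ 2) / lam x y t ^ 2).
    { apply Rdiv_lt_0_compat; auto. assert (0 < F2f x y t ^2) by (apply pow2_gt_0; auto). nra. }
    nra.
  - assert (0 < F3f x y t ^2) by (apply pow2_gt_0; auto). nra.
Qed.
Lemma minimal k : minimal_regular_levelset Fq (Qk k).
Proof.
  exists F1f, F2f, F3f. split; [|split].
  - intros x y t _. split; [apply d_Fq1|split; [apply d_Fq2|apply d_Fq3]].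
  - intros x y t HQ. pose proof (Qk_A k x y t HQ) as [A1 A2].
    split; [exact A2|split; [exact A1|apply (nondeg k x y t HQ)]].
  - intros ng N1 N2 N3 x y t HQ.
    pose proof (G_pos k x y t HQ) as HG.
    pose proof HQ as [H1 [H2 _]].
    assert (Hp : pp x y <> 0) by (unfold pp; lra).
    set (r := sqrt (Gf x y t)).
    assert (Hr : 0 < r) by (apply sqrt_lt_R0; auto).
    set (L := lam x y t).
    exists ((-2-2*cos t)/r - F1f x y t * Gx x y t / (2 * r * Gf x y t)).
    exists ((-2-2*cos t)/r - F2f x y t * Gy x y t / (2 * r * Gf x y t)).
    exists ((L^2 * (cos t * DD x y))/r - (L^2 * F3f x y t) * Gt x y t / (2 * r * Gf x y t)).
    split; [|split; [|split]].
    + unfold is_d1.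
      change (derivable_pt_lim (fun s => F1f s y t / sqrt (Gf s y t)) x
        ((-2-2*cos t)/r - F1f x y t * Gx x y t / (2 * r * Gf x y t))).
      apply (dsqrt_quot (fun s => F1f s y t) (fun s => Gf s y t)); auto; [|apply d_G1; auto].
      unfold F1f. apply is_derive_Reals. auto_derive; auto. ring.
    + unfold is_d2.
      change (derivable_pt_lim (fun s => F2f x s t / sqrt (Gf x s t)) y
        ((-2-2*cos t)/r - F2f x y t * Gy x y t / (2 * r * Gf x y t))).
      apply (dsqrt_quot (fun s => F2f x s t) (fun s => Gf x s t)); auto; [|apply d_G2; auto].
      unfold F2f. apply is_derive_Reals. auto_derive; auto. ring.
    + unfold is_d3.
      change (derivable_pt_lim (fun s => (lam x y s ^ 2 * F3f x y s) / sqrt (Gf x y s)) t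
        ((L^2 * (cos t * DD x y))/r - (L^2 * F3f x y t) * Gt x y t / (2 * r * Gf x y t))).
      apply (dsqrt_quot (fun s => lam x y s ^ 2 * F3f x y s) (fun s => Gf x y s)); auto; [|apply d_G3; auto].
      unfold F3f, L, lam, DD. apply is_derive_Reals. auto_derive; auto. unfold pp in Hp. field. lra.
    + pose proof (D_pos x y H1) as HD.
      assert (Hc : cos t = pp x y / DD x y) by (unfold pp, DD; rewrite H2; field; lra).
      assert (HS : sin t ^ 2 = 1 - cos t ^ 2) by (pose proof (sin2_cos2 t); unfold Rsqr in *; nra).
      pose proof (core x y (cos t) (sin t ^ 2) Hc HS ltac:(unfold DD in *; lra)) as C.
      cbv zeta in C.
      assert (Num : 2 * ((-2-2*cos t) + (-2-2*cos t) + L^2*(cos t * DD x y)) * Gf x y t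
         - (F1f x y t * Gx x y t + F2f x y t * Gy x y t + L^2 * F3f x y t * Gt x y t) = 0).
      { apply (Rmult_eq_reg_r (ww x y)); [|unfold ww; apply Rmult_integral_contrapositive_currified; [apply pow_nonzero; auto|lra]].
        rewrite Rmult_0_l. match type of C with ?e = 0 => transitivity (2 * e) end; [|rewrite C; ring].
        unfold L, Gf, lam, Gx, Gy, Gt, F1f, F2f, F3f, ww, DD, pp in *. field. auto. }
      apply (Rmult_eq_reg_r (2 * r * Gf x y t)); [|apply Rmult_integral_contrapositive_currified; lra].
      rewrite Rmult_0_l. rewrite <- Num. field. lra.
Qed.

Theorem mainTheorem5 :
  (* the connected components of Q ∩ {x^2+y^2<1} are exactly the Q_k *)
  (forall C : set3,
     connected_component3 (fun x y t => Qset x y t /\ DxR x y t) C <->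
     exists k : Z, forall x y t, C x y t <-> Qk k x y t) /\
  (forall k : Z,
     (* properly embedded (closed in D x R, regular level set) minimal surface *)
     rel_closed_in DxR (Qk k) /\
     minimal_regular_levelset Fq (Qk k) /\
     (* congruent to Psi_1(R x (0,pi)) via g x (vertical translation) *)
     exists c : R,
       (forall x y t, Qk k x y t ->
          parabolic_catenoid (g_re x y) (g_im x y) (t + c)) /\
       (forall u v s, parabolic_catenoid u v s ->
          exists x y t, Qk k x y t /\
            g_re x y = u /\ g_im x y = v /\ t + c = s)).
Proof.
  split.
  - intros C. exact (components C).
  - intros k. split; [apply Qk_relclosed|split; [apply minimal|apply congruence]].
Qed.
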